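(* Let $G$ be a countably infinite connected HE-homogeneous graph that contains a pair of distinct non-adjacent vertices. Then $G$ has no finite maximal independent sets and no finite maximal cliques. In particular, every vertex of $G$ has infinite degree and infinite codegree.
   Context: All graphs are undirected and loopless; subgraphs are induced. The codegree of a vertex is its degree in the complement graph. A homomorphism maps adjacent vertices to adjacent vertices. $G$ is HE-homogeneous if every homomorphism between finite induced subgraphs of $G$ is the restriction of a surjective endomorphism of $G$. *)

(* Defs.v *)
From Stdlib Require Import List Relations.
Import ListNotations.

Record simple_graph (V : Type) (adj : V -> V -> Prop) : Prop := {
  sg_sym : forall x y, adj x y -> adj y x;
  sg_irrefl : forall x, ~ adj x x
}.

Definition finite_set {V : Type} (A : V -> Prop) : Prop :=
  exists l : list V, forall x, A x <-> In x l.

Definition countably_infinite (V : Type) : Prop :=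
  exists f : nat -> V,
    (forall m n, f m = f n -> m = n) /\ (forall v, exists n, f n = v).

Definition connected {V : Type} (adj : V -> V -> Prop) : Prop :=
  forall x y, clos_refl_trans V adj x y.

(* h (its values on A) is a homomorphism from the induced subgraph on A
   to the induced subgraph on B. *)
Definition sub_hom {V : Type} (adj : V -> V -> Prop)
    (A B : V -> Prop) (h : V -> V) : Prop :=
  (forall x, A x -> B (h x)) /\
  (forall x y, A x -> A y -> adj x y -> adj (h x) (h y)).

Definition endomorphism {V : Type} (adj : V -> V -> Prop) (g : V -> V) : Prop :=
  forall x y, adj x y -> adj (g x) (g y).

Definition surjective_map {V : Type} (g : V -> V) : Prop :=
  forall y, exists x, g x = y.

Definition HE_homogeneous {V : Type} (adj : V -> V -> Prop) : Prop :=
  forall (A B : V -> Prop) (h : V -> V),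
    finite_set A -> finite_set B -> sub_hom adj A B h ->
    exists g : V -> V, endomorphism adj g /\ surjective_map g /\
      (forall x, A x -> g x = h x).

Definition independent {V : Type} (adj : V -> V -> Prop) (S : V -> Prop) : Prop :=
  forall x y, S x -> S y -> ~ adj x y.

Definition clique {V : Type} (adj : V -> V -> Prop) (S : V -> Prop) : Prop :=
  forall x y, S x -> S y -> x <> y -> adj x y.

Definition maximal_independent {V : Type} (adj : V -> V -> Prop) (S : V -> Prop) : Prop :=
  independent adj S /\
  forall T : V -> Prop, independent adj T -> (forall x, S x -> T x) -> forall x, T x -> S x.

Definition maximal_clique {V : Type} (adj : V -> V -> Prop) (S : V -> Prop) : Prop :=
  clique adj S /\
  forall T : V -> Prop, clique adj T -> (forall x, S x -> T x) -> forall x, T x -> S x.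

Definition neighbours {V : Type} (adj : V -> V -> Prop) (v : V) : V -> Prop :=
  fun w => adj v w.

Definition co_neighbours {V : Type} (adj : V -> V -> Prop) (v : V) : V -> Prop :=
  fun w => w <> v /\ ~ adj v w.

(* Main.v *)
Require Import Defs.
From Stdlib Require Import List Relations.
From Stdlib Require Import Classical ClassicalEpsilon.
Import ListNotations.

Definition pairwise {V : Type} (R : V -> V -> Prop) (S : V -> Prop) : Prop :=
  forall x y, S x -> S y -> x <> y -> R x y.

Lemma finite_and {V : Type} (A P : V -> Prop) :
  finite_set A -> finite_set (fun x => A x /\ P x).
Proof.
  intros [l Hl].
  assert (H : exists l', forall x, (In x l /\ P x) <-> In x l').
  { clear Hl. induction l as [|a l IH].
    - exists []. simpl. tauto.
    - destruct IH as [l' Hl'].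
      destruct (classic (P a)) as [Pa|nPa].
      + exists (a :: l'). intro x. simpl. rewrite <- Hl'.
        split; [intros [[<-|H] Px]; auto | intros [<-|[H Px]]; auto].
      + exists l'. intro x. simpl. rewrite <- Hl'.
        split; [intros [[<-|H] Px]; [contradiction|auto] | intros [H Px]; auto]. }
  destruct H as [l' Hl']. exists l'. intro x. rewrite <- Hl', <- Hl. tauto.
Qed.

Lemma finite_add {V : Type} (A : V -> Prop) (z : V) :
  finite_set A -> finite_set (fun x => A x \/ x = z).
Proof.
  intros [l Hl]. exists (z :: l). intro x. simpl. rewrite <- Hl. intuition.
Qed.

Lemma path_cross {V : Type} (adj : V -> V -> Prop) (S : V -> Prop) a b :
  clos_refl_trans V adj a b -> S a -> ~ S b -> exists u z, S u /\ ~ S z /\ adj u z.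
Proof.
  intro H. apply clos_rt_rt1n in H. induction H as [a|a m b Ham Hmb IH].
  - intros; contradiction.
  - intros Sa nSb. destruct (classic (S m)) as [Sm|nSm].
    + apply IH; auto.
    + exists a, m. auto.
Qed.

Lemma greedy {V : Type} (R : V -> V -> Prop) (v : V) (l : list V) :
  exists C : list V, In v C /\ pairwise R (fun x => In x C) /\
    (forall a, In a l -> In a C \/ ~ pairwise R (fun x => In x C \/ x = a)).
Proof.
  induction l as [|a l IH].
  - exists [v]. split; [simpl; auto|split].
    + intros x y [<-|[]] [<-|[]] H; congruence.
    + intros a [].
  - destruct IH as [C [HvC [HpC HC]]].
    assert (mono : forall (C C' : list V) b, (forall x, In x C -> In x C') ->
        ~ pairwise R (fun x => In x C \/ x = b) ->
        ~ pairwise R (fun x => In x C' \/ x = b)).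
    { intros C0 C1 b Hs Hn Hp. apply Hn. intros x y Hx Hy Hxy.
      apply Hp; auto; [destruct Hx | destruct Hy]; auto. }
    destruct (classic (pairwise R (fun x => In x C \/ x = a))) as [Hp|Hn].
    + exists (a :: C). split; [simpl; auto|split].
      * intros x y Hx Hy Hxy. simpl in Hx, Hy. apply Hp; intuition.
      * intros b [<-|Hb]; [left; simpl; auto|].
        destruct (HC b Hb) as [H|H]; [left; simpl; auto|right].
        apply (mono C); auto. intros; simpl; auto.
    + exists C. split; [auto|split; [auto|]].
      intros b [<-|Hb]; [right; auto| apply HC; auto].
Qed.

Section Main.
Context (V : Type) (adj : V -> V -> Prop) (Hsg : simple_graph V adj).

Lemma part1 : HE_homogeneous adj -> (exists x y : V, x <> y /\ ~ adj x y) ->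
  forall S : V -> Prop, finite_set S -> ~ maximal_independent adj S.
Proof.
  intros HE [x [y [Hxy Hnxy]]] S HS [HI HM].
  destruct (HE S (fun w => w = x) (fun _ => x) HS) as [g [Hg [Hsurj Hgh]]].
  - exists [x]. intro w. simpl. intuition.
  - split; [auto|]. intros a b Sa Sb Hab. exfalso; exact (HI a b Sa Sb Hab).
  - destruct (Hsurj y) as [w Hw].
    destruct (classic (S w)) as [Sw|nSw].
    + rewrite Hgh in Hw; auto.
    + destruct (classic (exists s, S s /\ adj s w)) as [[s [Ss Hsw]]|Hno].
      * apply Hg in Hsw. rewrite Hgh in Hsw by auto. rewrite Hw in Hsw. auto.
      * apply nSw. apply (HM (fun z => S z \/ z = w)); auto.
        intros a b [Sa| ->] [Sb| ->] Hab.
        -- exact (HI a b Sa Sb Hab).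
        -- apply Hno; eauto.
        -- apply Hno; exists b; split; auto. apply (sg_sym _ _ Hsg); auto.
        -- exact (sg_irrefl _ _ Hsg w Hab).
Qed.

Lemma part2 : connected adj -> HE_homogeneous adj -> (exists x y : V, x <> y /\ ~ adj x y) ->
  forall S : V -> Prop, finite_set S -> ~ maximal_clique adj S.
Proof.
  intros Hconn HE [x [y [Hxy Hnxy]]] S HS [HC HM].
  assert (Hb : exists b, ~ S b).
  { destruct (classic (S x)) as [Sx|nSx]; [|eauto].
    exists y. intro Sy. apply Hnxy. apply HC; auto. }
  destruct Hb as [b nSb].
  assert (Ha : exists a, S a).
  { destruct (classic (exists a, S a)) as [H|H]; auto.
    exists x. apply (HM (fun z => z = x)).
    - intros p q -> -> Hpq. congruence.
    - intros p Sp. exfalso; eauto.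
    - reflexivity. }
  destruct Ha as [a Sa].
  destruct (path_cross adj S a b (Hconn a b) Sa nSb) as [u [z [Su [nSz Huz]]]].
  set (h := fun w => if excluded_middle_informative (w = z) then u else w).
  assert (hz : h z = u).
  { unfold h. destruct (excluded_middle_informative (z = z)); congruence. }
  assert (hw : forall w, w <> z -> h w = w).
  { intros w Hw. unfold h. destruct (excluded_middle_informative (w = z)); congruence. }
  assert (HA : finite_set (fun w => (S w /\ w <> u) \/ w = z)).
  { apply finite_add. apply finite_and. auto. }
  destruct (HE _ S h HA HS) as [g [Hg [Hsurj Hgh]]].
  - split.
    + intros w [[Sw Hwu]| ->]; [rewrite hw; auto; congruence | rewrite hz; auto].
    + intros p q Hp Hq Hpq.
      destruct Hp as [[Sp Hpu]| ->]; destruct Hq as [[Sq Hqu]| ->].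
      * rewrite !hw by congruence. auto.
      * rewrite hz, hw by congruence. apply HC; auto.
      * rewrite hz, hw by congruence. apply HC; auto.
      * exfalso. exact (sg_irrefl _ _ Hsg z Hpq).
  - assert (Hadj : forall w, S w -> adj (g u) w).
    { intros w Sw. destruct (classic (w = u)) as [->|Hwu].
      - assert (E : g z = u) by (rewrite Hgh; auto).
        rewrite <- E at 2. apply Hg. auto.
      - assert (E : g w = w) by (rewrite Hgh by (left; auto); apply hw; congruence).
        rewrite <- E. apply Hg. apply HC; auto. }
    assert (Sgu : S (g u)).
    { apply (HM (fun w => S w \/ w = g u)); auto.
      intros p q [Sp| ->] [Sq| ->] Hpq.
      - apply HC; auto.
      - apply (sg_sym _ _ Hsg). auto.
      - auto.
      - congruence. }
    apply (sg_irrefl _ _ Hsg (g u)). apply Hadj. exact Sgu.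
Qed.

Lemma greedy_max (R : V -> V -> Prop) (v : V) (l : list V) :
  (forall t, t <> v -> R v t -> In t l) ->
  exists C : list V, pairwise R (fun x => In x C) /\
    forall T, pairwise R T -> (forall x, In x C -> T x) -> forall x, T x -> In x C.
Proof.
  intros Hl. destruct (greedy R v l) as [C [HvC [HpC HC]]].
  exists C. split; auto. intros T HT Hsub t Tt.
  destruct (classic (t = v)) as [->|Htv]; auto.
  destruct (HC t (Hl t Htv (HT v t (Hsub v HvC) Tt (fun e => Htv (eq_sym e))))) as [H|H]; auto.
  exfalso. apply H. intros p q Hp Hq Hpq. apply HT; auto;
  [destruct Hp as [Hp| ->] | destruct Hq as [Hq| ->]]; auto.
Qed.

End Main.

Theorem proposition5p5 (V : Type) (adj : V -> V -> Prop) :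
  simple_graph V adj ->
  countably_infinite V ->
  connected adj ->
  HE_homogeneous adj ->
  (exists x y : V, x <> y /\ ~ adj x y) ->
  (forall S : V -> Prop, finite_set S -> ~ maximal_independent adj S) /\
  (forall S : V -> Prop, finite_set S -> ~ maximal_clique adj S) /\
  (forall v : V, ~ finite_set (neighbours adj v) /\ ~ finite_set (co_neighbours adj v)).
Proof.
  intros Hsg _ Hconn HE Hpair.
  pose proof (part1 V adj Hsg HE Hpair) as P1.
  pose proof (part2 V adj Hsg Hconn HE Hpair) as P2.
  split; [exact P1|split; [exact P2|]].
  intro v. split.
  - intros [l Hl].
    destruct (greedy_max V adj v l) as [C [HpC HM]].
    { intros t _ Ht. apply Hl. exact Ht. }
    apply (P2 (fun x => In x C)).
    + exists C. intro; tauto.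
    + split; auto.
  - intros [l Hl].
    destruct (greedy_max V (fun a b => ~ adj a b) v l) as [C [HpC HM]].
    { intros t Htv Ht. apply Hl. split; auto. }
    apply (P1 (fun x => In x C)).
    + exists C. intro; tauto.
    + split.
      * intros p q Hp Hq. destruct (classic (p = q)) as [->|Hpq].
        -- apply (sg_irrefl _ _ Hsg).
        -- apply HpC; auto.
      * intros T HT. apply HM. intros p q Hp Hq _. apply HT; auto.
Qed.
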